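(* Let $\widehat P$ be any transition model on $\mathcal{S}\times\mathcal{A}$, and let $\widetilde d_h$ be given by $\widetilde d_h(s,a)=\frac{1}{n'}\sum_{\operatorname{tr}\in\mathcal{D}'_{\mathrm{env}}}\mathbb{I}\{(s_h,a_h)=(s,a),\operatorname{tr}_h\in\mathbf{Tr}_h^{\mathcal{D}_1}\}+\frac{1}{|\mathcal{D}_1^c|}\sum_{\operatorname{tr}\in\mathcal{D}_1^c}\mathbb{I}\{(s_h,a_h)=(s,a),\operatorname{tr}_h\notin\mathbf{Tr}_h^{\mathcal{D}_1}\}$ for finite nonempty trajectory sets $\mathcal{D}'_{\mathrm{env}}$ (of size $n'$), $\mathcal{D}_1$, $\mathcal{D}_1^c$. Fix $\varepsilon>0$ and run the gradient-based optimization procedure described in the context with $\varepsilon_{\operatorname{RL}}\le\varepsilon/2$, $T\gtrsim H^2|\mathcal{S}||\mathcal{A}|/\varepsilon^2$ and $\eta^{(t)}=\sqrt{|\mathcal{S}||\mathcal{A}|/(8T)}$. Then its output $\bar\pi$ satisfies $$\sum_{h=1}^H\|d_h^{\bar\pi,\widehat P}-\widetilde d_h\|_1\le\min_{\pi\in\Pi}\sum_{h=1}^H\|d_h^{\pi,\widehat P}-\widetilde d_h\|_1+\varepsilon.$$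
   Context: Finite $\mathcal{S},\mathcal{A}$, horizon $H$, initial distribution $\rho$. Trajectories $\operatorname{tr}=(s_1,a_1,\dots,s_H,a_H)$, $\operatorname{tr}_h=(s_1,a_1,\dots,s_h,a_h)$; $\mathcal{S}_h(\mathcal{D}')$ is the set of step-$h$ states in $\mathcal{D}'$ and $\mathbf{Tr}_h^{\mathcal{D}'}=\{(s_1,a_1,\dots,s_h,a_h):s_\ell\in\mathcal{S}_\ell(\mathcal{D}')\ \forall\ell\le h\}$. $\Pi$ is the set of policies $\pi_h:\mathcal{S}\to\Delta(\mathcal{A})$; $d_h^{\pi,\widehat P}(s,a)$ is the probability that $(s_h,a_h)=(s,a)$ when running $\pi$ from $s_1\sim\rho$ with transitions $\widehat P$; $V^{\pi,\widehat P,w}=\sum_h\sum_{(s,a)}d_h^{\pi,\widehat P}(s,a)w_h(s,a)$. Procedure: $\mathcal{W}=\{w=(w_h)_{h\le H}:\|w_h\|_\infty\le1\}$, $w^{(1)}\in\mathcal{W}$; for $t=1,\dots,T$: pick $\pi^{(t)}$ with $V^{\pi^{(t)},\widehat P,w^{(t)}}\ge\max_\pi V^{\pi,\widehat P,w^{(t)}}-\varepsilon_{\operatorname{RL}}$; with $f^{(t)}(w)=\sum_h\sum_{(s,a)}w_h(s,a)(d_h^{\pi^{(t)},\widehat P}(s,a)-\widetilde d_h(s,a))$, set $w^{(t+1)}=\mathcal{P}_{\mathcal{W}}(w^{(t)}-\eta^{(t)}\nabla f^{(t)}(w^{(t)}))$, $\mathcal{P}_{\mathcal{W}}$ the Euclidean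 projection. Output $\bar\pi_h(a|s)=\bar d_h(s,a)/\sum_{a'}\bar d_h(s,a')$ where $\bar d_h=\frac1T\sum_{t}d_h^{\pi^{(t)},\widehat P}$. $a\gtrsim b$ means $a\ge Cb$ for a sufficiently large universal constant $C$. *)

(* Defs.v *)
From HB Require Import structures.
From mathcomp Require Import all_boot all_order all_algebra.
From mathcomp Require Import reals.
Set Implicit Arguments. Unset Strict Implicit. Unset Printing Implicit Defensive.
Import Order.TTheory GRing.Theory Num.Theory.
Local Open Scope ring_scope.

Section Defs.
Variables (R : realType) (S A : finType) (H : nat).

(* A trajectory tr = (s_1,a_1,...,s_H,a_H); steps are indexed 0..H-1. *)
Definition traj := 'I_H -> (S * A)%type.

Definition is_dist (rho : S -> R) :=
  (forall s, 0 <= rho s) /\ \sum_(s : S) rho s = 1.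

(* P s a s' = P(s' | s, a); a transition model is a distribution for each (s,a). *)
Definition is_transition (P : S -> A -> S -> R) :=
  forall s a, is_dist (P s a).

(* Markov policy: pi h s a = pi_h(a|s), a distribution over A for each step h < H. *)
Definition is_policy (pi : nat -> S -> A -> R) :=
  forall h, (h < H)%N -> forall s,
    (forall a, 0 <= pi h s a) /\ \sum_(a : A) pi h s a = 1.

(* occupancy d_h^{pi,P}(s,a) (step h, 0-based) *)
Fixpoint occ (rho : S -> R) (P : S -> A -> S -> R) (pi : nat -> S -> A -> R)
  (h : nat) : S -> A -> R :=
  match h with
  | 0 => fun s a => rho s * pi 0%N s a
  | h'.+1 => fun s' a' =>
      (\sum_(s : S) \sum_(a : A) occ rho P pi h' s a * P s a s') * pi h'.+1 s' a'
  end.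

Definition value rho P pi (w : 'I_H -> S -> A -> R) : R :=
  \sum_(h < H) \sum_(s : S) \sum_(a : A) occ rho P pi h s a * w h s a.

(* tr_h \in Tr_h^{D1}: for all l <= h, s_l is a step-l state of D1 *)
Definition prefix_in (D1 : seq traj) (h : 'I_H) (tr : traj) : bool :=
  [forall l : 'I_H, (l <= h)%N ==> has (fun tr' => (tr' l).1 == (tr l).1) D1].

Definition dtilde (Denv D1 D1c : seq traj) (h : 'I_H) (s : S) (a : A) : R :=
  (size Denv)%:R^-1 *
    \sum_(tr <- Denv) ((tr h == (s, a)) && prefix_in D1 h tr)%:R
  + (size D1c)%:R^-1 *
    \sum_(tr <- D1c) ((tr h == (s, a)) && ~~ prefix_in D1 h tr)%:R.

Definition occ_l1 rho P pi (dt : 'I_H -> S -> A -> R) : R :=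
  \sum_(h < H) \sum_(s : S) \sum_(a : A) `|occ rho P pi h s a - dt h s a|.

Definition inW (w : 'I_H -> S -> A -> R) :=
  forall h s a, `|w h s a| <= 1.

Definition sqdist (u v : 'I_H -> S -> A -> R) : R :=
  \sum_(h < H) \sum_(s : S) \sum_(a : A) (u h s a - v h s a) ^+ 2.

Definition is_projW (v u : 'I_H -> S -> A -> R) :=
  inW u /\ forall u', inW u' -> sqdist u v <= sqdist u' v.

(* gradient of the linear f^(t)(w) = sum w (d^{pi_t} - dt) *)
Definition grad_f rho P pi (dt : 'I_H -> S -> A -> R) : 'I_H -> S -> A -> R :=
  fun h s a => occ rho P pi h s a - dt h s a.

Definition dbar rho P (pis : nat -> nat -> S -> A -> R) (T : nat) (h : nat) s a : R :=
  T%:R^-1 * \sum_(1 <= t < T.+1) occ rho P (pis t) h s a.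

(* bar pi_h(a|s) = bar d_h(s,a) / sum_a' bar d_h(s,a')  (x/0 = 0 convention) *)
Definition pibar rho P pis T : nat -> S -> A -> R :=
  fun h s a => dbar rho P pis T h s a / \sum_(a' : A) dbar rho P pis T h s a'.

End Defs.

(* Main.v *)
Require Import Defs.
From HB Require Import structures.
From mathcomp Require Import all_boot all_order all_algebra.
From mathcomp Require Import reals.
From mathcomp Require Import ring lra.
Import Order.TTheory GRing.Theory Num.Theory.
Local Open Scope ring_scope.
Section Aux.
Variables (R : realType) (S A : finType) (H : nat).
Notation X := ('I_H * (S * A))%type.
Implicit Types F u v : 'I_H -> S -> A -> R.
Implicit Types (rho : S -> R) (P : S -> A -> S -> R) (pi : nat -> S -> A -> R).

Definition tot F : R := \sum_(x : X) F x.1 x.2.1 x.2.2.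

Lemma totE F : \sum_(h < H) \sum_(s : S) \sum_(a : A) F h s a = tot F.
Proof.
rewrite /tot -(pair_big predT predT (fun h p => F h p.1 p.2)) /=.
by apply: eq_bigr => h _; rewrite (pair_big predT predT).
Qed.

Lemma cardX : #|{: X}| = (H * (#|S| * #|A|))%N.
Proof. by rewrite !card_prod card_ord. Qed.

Lemma tot_const (c : R) : tot (fun _ _ _ => c) = c * (H * (#|S| * #|A|))%N%:R.
Proof. by rewrite /tot sumr_const cardX mulr_natr. Qed.

Lemma tot_le F G : (forall h s a, F h s a <= G h s a) -> tot F <= tot G.
Proof. by move=> FG; apply: ler_sum => x _; apply: FG. Qed.

Lemma totB F G : tot (fun h s a => F h s a - G h s a) = tot F - tot G.
Proof. by rewrite /tot -sumrB. Qed.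

Lemma totZ (c : R) F : tot (fun h s a => c * F h s a) = c * tot F.
Proof. by rewrite /tot mulr_sumr. Qed.

Lemma tot_sum (T : nat) (G : nat -> 'I_H -> S -> A -> R) :
  \sum_(1 <= t < T.+1) tot (G t) = tot (fun h s a => \sum_(1 <= t < T.+1) G t h s a).
Proof. by rewrite /tot exchange_big. Qed.

Lemma eq_tot F G : (forall h s a, F h s a = G h s a) -> tot F = tot G.
Proof. by move=> FG; apply: eq_bigr => x _; apply: FG. Qed.

Lemma real_proj (ww vv uu : R) : `|ww| <= 1 -> `|uu| <= 1 ->
  (forall y : R, `|y| <= 1 -> (ww - vv)^+2 <= (y - vv)^+2) ->
  (ww - uu)^+2 <= (vv - uu)^+2.
Proof.
rewrite !ler_norml => /andP[w1 w2] /andP[u1 u2] Hy.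
have [vlo|vlo] := lerP vv 1; have [vhi|vhi] := lerP (-1) vv.
- have := Hy vv; rewrite subrr expr0n /= => /(_ _).
  rewrite ler_norml vlo vhi => /(_ isT) h.
  have : (ww - vv) ^+ 2 = 0 by apply/le_anti; rewrite h sqr_ge0.
  by move/eqP; rewrite sqrf_eq0 subr_eq0 => /eqP ->.
- have := Hy (-1); rewrite ler_norml lexx /= => /(_ _).
  move=> /(_ ltac:(lra)) h. 
  have e : ww = -1 by nra.
  rewrite e; nra.
- have := Hy 1; rewrite ler_norml lexx /= => /(_ _).
  move=> /(_ ltac:(lra)) h.
  have e : ww = 1 by nra.
  rewrite e; nra.
- lra.
Qed.

Lemma proj_coord v w' : is_projW v w' -> forall u, inW u ->
  forall h s a, (w' h s a - u h s a)^+2 <= (v h s a - u h s a)^+2.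
Proof.
move=> [Ww Hmin] u Wu h s a.
apply: real_proj; [exact: Ww| exact: Wu|] => y y1.
pose u' := fun h' s' a' => if (h', (s', a')) == (h, (s, a)) then y else w' h' s' a'.
have Wu' : inW u'.
  by move=> h' s' a'; rewrite /u'; case: ifP => _ //; apply: Ww.
have := Hmin u' Wu'.
rewrite /sqdist !totE /tot [X in X <= _](bigD1 (h, (s, a))) //=.
rewrite [X in _ <= X](bigD1 (h, (s, a))) //=.
rewrite /u' /= eqxx.
have -> : \sum_(i | i != (h, (s, a)))
    ((if (i.1, (i.2.1, i.2.2)) == (h, (s, a)) then y else w' i.1 i.2.1 i.2.2)
      - v i.1 i.2.1 i.2.2) ^+ 2 =
  \sum_(i | i != (h, (s, a))) (w' i.1 i.2.1 i.2.2 - v i.1 i.2.1 i.2.2) ^+ 2.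
  apply: eq_bigr => -[h' [s' a']] /= /negbTE -> //.
by rewrite lerD2r.
Qed.

Lemma pol_sum (pi : nat -> S -> A -> R) h s (c : R) : is_policy H pi -> (h < H)%N ->
  \sum_(a : A) c * pi h s a = c.
Proof. by move=> Hp hH; rewrite -mulr_sumr (Hp h hH s).2 mulr1. Qed.

Lemma pol_ge0 (pi : nat -> S -> A -> R) h s a : is_policy H pi -> (h < H)%N ->
  0 <= pi h s a.
Proof. by move=> Hp hH; apply: (Hp h hH s).1. Qed.

Lemma occ_ge0 rho P pi : is_dist rho -> is_transition P -> is_policy H pi ->
  forall h, (h < H)%N -> forall s a, 0 <= occ rho P pi h s a.
Proof.
move=> [r0 r1] HP Hp; elim=> [|h IH] hH s a /=.
  by apply: mulr_ge0 => //; apply: pol_ge0.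
apply: mulr_ge0; last by apply: pol_ge0.
apply: sumr_ge0 => s0 _; apply: sumr_ge0 => a0 _; apply: mulr_ge0.
  by apply: IH; apply: ltnW.
exact: (HP s0 a0).1.
Qed.

Lemma occ_sum1 rho P pi : is_dist rho -> is_transition P -> is_policy H pi ->
  forall h, (h < H)%N -> \sum_(s : S) \sum_(a : A) occ rho P pi h s a = 1.
Proof.
move=> [r0 r1] HP Hp; elim=> [|h IH] hH /=.
  by under eq_bigr => s _ do rewrite pol_sum //.
under eq_bigr => s _ do rewrite pol_sum //.
rewrite exchange_big /=.
under eq_bigr => s _ do rewrite exchange_big /=.
under eq_bigr => s _ do under eq_bigr => a _ do rewrite -mulr_sumr (HP s a).2 mulr1.
by apply: IH; apply: ltnW.
Qed.

Lemma div_fill (m : R) (F : A -> R) : (forall a, 0 <= F a) -> \sum_a F a = m ->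
  forall a, m * (F a / m) = F a.
Proof.
move=> F0 Fm a; have [m0|m0] := eqVneq m 0.
  rewrite m0 in Fm; rewrite m0.
  by rewrite mul0r (psumr_eq0P (P := predT) (fun i _ => F0 i) Fm) //.
by rewrite mulrC divfK.
Qed.

Lemma ogd (w g : nat -> 'I_H -> S -> A -> R) (eta : R) (T : nat) u : inW u ->
  (forall t, (1 <= t <= T)%N ->
     is_projW (fun h s a => w t h s a - eta * g t h s a) (w t.+1)) ->
  2 * eta * \sum_(1 <= t < T.+1) tot (fun h s a => (w t h s a - u h s a) * g t h s a)
  <= tot (fun h s a => (w 1%N h s a - u h s a)^+2)
     + eta^+2 * \sum_(1 <= t < T.+1) tot (fun h s a => g t h s a ^+ 2).
Proof.
move=> Wu Hp.
pose Af t := tot (fun h s a => (w t h s a - u h s a)^+2).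
have key : forall t, (1 <= t <= T)%N ->
    2 * eta * tot (fun h s a => (w t h s a - u h s a) * g t h s a)
    <= Af t - Af t.+1 + eta^+2 * tot (fun h s a => g t h s a ^+ 2).
  move=> t tT; have Hc := @proj_coord _ _ (Hp t tT) u Wu.
  rewrite /Af /tot mulr_sumr -sumrB mulr_sumr -big_split /=.
  apply: ler_sum => x _; have := Hc x.1 x.2.1 x.2.2.
  move: (w t x.1 x.2.1 x.2.2) (w t.+1 x.1 x.2.1 x.2.2) (u x.1 x.2.1 x.2.2)
    (g t x.1 x.2.1 x.2.2) => p q r z hh.
  nra.
rewrite mulr_sumr.
apply: (le_trans (y := \sum_(1 <= t < T.+1)
   (Af t - Af t.+1 + eta^+2 * tot (fun h s a => g t h s a ^+ 2)))).
  rewrite big_nat_cond [X in _ <= X]big_nat_cond; apply: ler_sum.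
  by move=> t /andP[/andP[t1 tT] _]; apply: key; rewrite t1 -ltnS.
rewrite big_split /= -mulr_sumr.
rewrite (telescope_sumr_eq (fun t => - Af t)) //; last first.
  by move=> k _; rewrite opprK addrC.
have : 0 <= Af T.+1 by apply: sumr_ge0 => x _; apply: sqr_ge0.
move=> h0; rewrite opprK lerD2r addrC lerBlDr lerDl //.
Qed.

Lemma elem_le (F : S -> A -> R) s a : (forall s a, 0 <= F s a) ->
  F s a <= \sum_(s' : S) \sum_(a' : A) F s' a'.
Proof.
move=> F0; rewrite (pair_big predT predT (fun s a => F s a)) /=.
rewrite (bigD1 (s, a)) //= lerDl; apply: sumr_ge0 => p _; apply: F0.
Qed.

Lemma sum_ind (tr : traj S A H) h :
  \sum_(s : S) \sum_(a : A) ((tr h == (s, a)))%:R = 1 :> R.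
Proof.
rewrite (pair_big predT predT (fun s a => ((tr h == (s, a)))%:R)) /=.
rewrite (bigD1 (tr h)) //= -[(_, _)]surjective_pairing eqxx big1 ?addr0 //.
by move=> p /negbTE; rewrite -[(p.1, p.2)]surjective_pairing eq_sym => ->.
Qed.

Lemma part_le1 (D : seq (traj S A H)) (q : traj S A H -> bool) h : (0 < size D)%N ->
  \sum_(s : S) \sum_(a : A)
    ((size D)%:R^-1 * \sum_(tr <- D) ((tr h == (s, a)) && q tr)%:R) <= 1 :> R.
Proof.
move=> D0.
under eq_bigr do rewrite -mulr_sumr.
rewrite -mulr_sumr.
under eq_bigr do rewrite exchange_big /=.
rewrite exchange_big /=.
rewrite ler_pdivrMl ?ltr0n // mulr1.
apply: (le_trans (y := \sum_(tr <- D) (1 : R))); last first.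
  suff -> : \sum_(tr <- D) (1 : R) = (size D)%:R by [].
  elim: (D) => [|x D' IH]; first by rewrite big_nil.
  by rewrite big_cons IH /= -add1n natrD.
apply: ler_sum => tr _; rewrite -[X in _ <= X](sum_ind tr h).
apply: ler_sum => s _; apply: ler_sum => a _.
by case: (tr h == (s, a)); case: (q tr); rewrite /= ?lexx ?ler01.
Qed.

Lemma g2_bound rho P pi (dt : 'I_H -> S -> A -> R) :
  is_dist rho -> is_transition P -> is_policy H pi ->
  (forall h s a, 0 <= dt h s a) ->
  (forall h, \sum_(s : S) \sum_(a : A) dt h s a <= 2) ->
  tot (fun h s a => (occ rho P pi h s a - dt h s a) ^+ 2) <= 5 * H%:R.
Proof.
move=> Hr HP Hp d0 d2; rewrite -totE.
apply: (le_trans (y := \sum_(h < H) \sum_(s : S) \sum_(a : A)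
   (occ rho P pi h s a + 2 * dt h s a))).
  apply: ler_sum => h _; apply: ler_sum => s _; apply: ler_sum => a _.
  have o0 := @occ_ge0 rho P pi Hr HP Hp h (ltn_ord h) s a.
  have o1 : occ rho P pi h s a <= 1.
    rewrite -(@occ_sum1 rho P pi Hr HP Hp h (ltn_ord h)).
    by apply: elem_le => s' a'; apply: occ_ge0.
  have e0 := d0 h s a.
  have e2 : dt h s a <= 2 by apply: le_trans (d2 h); apply: elem_le.
  nra.
apply: (le_trans (y := \sum_(h < H) (5 : R))); last first.
  by rewrite sumr_const card_ord mulr_natr.
apply: ler_sum => h _.
under eq_bigr do rewrite big_split /=.
rewrite big_split /=.
under [X in _ + X]eq_bigr do rewrite -mulr_sumr.
rewrite -mulr_sumr (@occ_sum1 rho P pi Hr HP Hp h (ltn_ord h)).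
have := d2 h; lra.
Qed.

Lemma dt_ge0 (Denv D1 D1c : seq (traj S A H)) h s a :
  0 <= @dtilde R S A H Denv D1 D1c h s a.
Proof.
by apply: addr_ge0; apply: mulr_ge0; rewrite ?invr_ge0 ?ler0n //;
  apply: sumr_ge0 => tr _; rewrite ler0n.
Qed.

Lemma dt_sum (Denv D1 D1c : seq (traj S A H)) h :
  (0 < size Denv)%N -> (0 < size D1c)%N ->
  \sum_(s : S) \sum_(a : A) @dtilde R S A H Denv D1 D1c h s a <= 2.
Proof.
move=> p1 p2; rewrite /dtilde.
under eq_bigr do rewrite big_split /=.
rewrite big_split /=.
have := @part_le1 Denv (prefix_in D1 h) h p1.
have := @part_le1 D1c (fun tr => ~~ prefix_in D1 h tr) h p2.
lra.
Qed.

Section Dbar.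
Variables (rho : S -> R) (P : S -> A -> S -> R) (pis : nat -> nat -> S -> A -> R) (T : nat).
Hypothesis (Hr : is_dist rho) (HP : is_transition P) (T0 : (0 < T)%N)
  (Hpis : forall t, (1 <= t <= T)%N -> is_policy H (pis t)).

Lemma avg_const (c : R) (G : nat -> R) : (forall t, (1 <= t <= T)%N -> G t = c) ->
  T%:R^-1 * \sum_(1 <= t < T.+1) G t = c.
Proof.
move=> HG; rewrite big_nat_cond (eq_bigr (fun=> c)); last first.
  by move=> t /andP[/andP[t1 tT] _]; apply: HG; rewrite t1 -ltnS.
rewrite -big_nat_cond sumr_const_nat subn1 /= -[c *+ T]mulr_natl mulrA mulVf ?mul1r //.
by rewrite pnatr_eq0 -lt0n.
Qed.

Lemma dbar_ge0 h s a : (h < H)%N -> 0 <= dbar rho P pis T h s a.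
Proof.
move=> hH; apply: mulr_ge0; first by rewrite invr_ge0 ler0n.
rewrite big_nat_cond; apply: sumr_ge0 => t /andP[/andP[t1 tT] _].
by apply: occ_ge0 => //; apply: Hpis; rewrite t1 -ltnS.
Qed.

Lemma dbar_sum0 s : (0 < H)%N -> \sum_a dbar rho P pis T 0 s a = rho s.
Proof.
move=> H0; rewrite /dbar -mulr_sumr exchange_big /=.
apply: avg_const => t tT /=.
by rewrite pol_sum //; apply: Hpis.
Qed.

Lemma dbar_sumS h s' : (h.+1 < H)%N -> \sum_a dbar rho P pis T h.+1 s' a =
  \sum_(s : S) \sum_(a : A) dbar rho P pis T h s a * P s a s'.
Proof.
move=> hH; rewrite /dbar -mulr_sumr exchange_big /=.
rewrite (eq_big_nat _ _ (F2 := fun t => \sum_(s : S) \sum_(a : A) occ rho P (pis t) h s a * P s a s')); last first.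
  by move=> t tT; rewrite pol_sum //; apply: Hpis.
under [RHS]eq_bigr do under eq_bigr do rewrite -mulrA mulr_suml.
under [RHS]eq_bigr do rewrite -mulr_sumr.
rewrite -mulr_sumr; congr (_ * _).
under [RHS]eq_bigr do rewrite exchange_big /=.
by rewrite [RHS]exchange_big.
Qed.

Lemma occ_pibar h : (h < H)%N -> forall s a,
  occ rho P (pibar rho P pis T) h s a = dbar rho P pis T h s a.
Proof.
elim: h => [|h IH] hH s a /=.
  rewrite /pibar dbar_sum0 //.
  apply: (@div_fill _ (dbar rho P pis T 0 s)); last exact: dbar_sum0.
  by move=> a'; apply: dbar_ge0.
have hH' : (h < H)%N by apply: ltnW.
under eq_bigr do under eq_bigr do rewrite IH //.
rewrite /pibar -dbar_sumS //; apply: (@div_fill _ (dbar rho P pis T h.+1 s)) => //.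
by move=> a'; apply: dbar_ge0.
Qed.

End Dbar.
End Aux.
Lemma final_num (R : realType) (Hn k Tn eta eps epsRL Lbar Lpi Sdiff Sw Su R1 R2 : R) :
 0 < Tn -> 0 < eta -> 0 <= Hn -> 0 < eps -> eta^+2 * (8 * Tn) = k ->
 200 * Hn^+2 * k <= Tn * eps^+2 ->
 2 * eta * Sdiff <= R1 + eta^+2 * R2 -> R1 <= 4 * (Hn * k) -> R2 <= Tn * (5 * Hn) ->
 Sdiff = Sw - Su -> Su = - (Tn * Lbar) -> - (Tn * Lpi) <= Sw + Tn * epsRL ->
 epsRL <= eps / 2 -> Lbar <= Lpi + eps.
Proof.
move=> T0 e0 H0 ep0 hk hT hR hR1 hR2 e1 e2 e3 e4.
have e20 : 0 < eta ^+ 2 by apply: exprn_gt0.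
have h1 : eta^+2 * R2 <= eta^+2 * (Tn * (5 * Hn)) by rewrite ler_pM2l.
have h2 : 2 * eta * Sdiff <= 37 * Hn * Tn * eta^+2.
  rewrite -hk in hR1; lra.
have h3 : (37 * Hn * eta)^+2 <= eps^+2.
  rewrite -hk in hT.
  have : (37 * Hn * eta)^+2 * (8 * Tn) <= eps^+2 * (8 * Tn).
    have : (37 * Hn * eta)^+2 * (8 * Tn) = 1369 / 200 * (200 * Hn^+2 * (eta^+2 * (8 * Tn))).
      by field.
    move=> ->.
    have : 0 <= Tn * eps^+2 by apply: mulr_ge0; [lra| apply: sqr_ge0].
    lra.
  by rewrite ler_pM2r; lra.
have h4 : 37 * Hn * eta <= eps.
  rewrite -(ler_pXn2r (n := 2)) //.
  - by rewrite nnegrE; apply: mulr_ge0; lra.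
  - by rewrite nnegrE; lra.
have h5 : 2 * eta * Sdiff <= 2 * eta * (Tn * eps / 2).
  apply: (le_trans h2).
  have : Tn * eta * (37 * Hn * eta) <= Tn * eta * eps.
    rewrite ler_pM2l //; apply: mulr_gt0; lra.
  have -> : 37 * Hn * Tn * eta ^+ 2 = Tn * eta * (37 * Hn * eta) by rewrite expr2; ring.
  have -> : 2 * eta * (Tn * eps / 2) = Tn * eta * eps by field.
  done.
rewrite ler_pM2l in h5; last lra.
have : Tn * Lbar <= Tn * (Lpi + eps) by nra.
by rewrite ler_pM2l.
Qed.

Arguments final_num {R Hn k Tn eta eps epsRL Lbar Lpi Sdiff Sw Su R1 R2}.

Theorem lemma5 :
  exists C : nat,
  forall (R : realType) (S A : finType) (H : nat)
    (rho : S -> R) (P : S -> A -> S -> R)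
    (Denv D1 D1c : seq (traj S A H))
    (eps epsRL : R) (T : nat)
    (pis : nat -> nat -> S -> A -> R)
    (w : nat -> 'I_H -> S -> A -> R),
  is_dist rho -> is_transition P ->
  (0 < size Denv)%N -> (0 < size D1)%N -> (0 < size D1c)%N ->
  0 < eps -> epsRL <= eps / 2 ->
  (C * H ^ 2 * #|S| * #|A|)%:R / eps ^+ 2 <= T%:R ->
  let dt := @dtilde R S A H Denv D1 D1c in
  let eta := Num.sqrt ((#|S| * #|A|)%:R / (8 * T)%:R) : R in
  inW (w 1%N) ->
  (forall t, (1 <= t <= T)%N ->
     is_policy H (pis t) /\
     forall pi, is_policy H pi ->
       value rho P pi (w t) <= value rho P (pis t) (w t) + epsRL) ->
  (forall t, (1 <= t <= T)%N ->
     is_projW (fun h s a => w t h s a - eta * grad_f rho P (pis t) dt h s a)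
              (w t.+1)) ->
  forall pi, is_policy H pi ->
    occ_l1 rho P (pibar rho P pis T) dt <= occ_l1 rho P pi dt + eps.
Proof.
exists 200%N => R S A H rho P Denv D1 D1c eps epsRL T pis w Hr HP pDenv pD1 pD1c
  eps0 epsRLh hT dt eta W1 HRL Hproj pi Hpi.
have [HK0|HK0] := eqVneq (H * (#|S| * #|A|))%N 0%N.
  have z : forall pi', occ_l1 rho P pi' dt = 0.
    move=> pi'; rewrite /occ_l1 totE /tot big1 // => x _.
    by move: (card0_eq (etrans (@cardX S A H) HK0) x); rewrite inE.
  by rewrite !z add0r; apply: ltW.
have H0 : (0 < H)%N by rewrite lt0n; apply: contraNneq HK0 => ->.
have K0 : (0 < #|S| * #|A|)%N by rewrite lt0n; apply: contraNneq HK0 => ->; rewrite muln0.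
have e20 : 0 < eps ^+ 2 by apply: exprn_gt0.
rewrite ler_pdivrMr // in hT.
have T0 : (0 < T)%N.
  rewrite lt0n; apply/negP => /eqP T0; rewrite T0 mul0r in hT.
  have : (0 : R) < (200 * H ^ 2 * #|S| * #|A|)%N%:R.
    by rewrite ltr0n -mulnA muln_gt0 muln_gt0 expn_gt0 H0 K0.
  lra.
have Hpis : forall t, (1 <= t <= T)%N -> is_policy H (pis t) := fun t tT => (HRL t tT).1.
have Wt : forall t, (1 <= t <= T)%N -> inW (w t).
  elim=> [|t IH] // tT; case: t IH tT => [|t] IH tT; first exact: W1.
  apply: (Hproj t.+1 _).1; move: tT => /andP[_ tT]; rewrite /= ltnW //.
pose g := fun t => grad_f rho P (pis t) dt.
pose db := dbar rho P pis T.
pose u := fun (h : 'I_H) (s : S) (a : A) => if 0 <= db h s a - dt h s a then -1 else 1 : R.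
have Wu : inW u by move=> h s a; rewrite /u; case: ifP; rewrite ?normrN normr1.
have ogdH := @ogd R S A H w g eta T u Wu Hproj.
pose Lpi := occ_l1 rho P pi dt.
pose Lbar := occ_l1 rho P (pibar rho P pis T) dt.
pose Sdiff := \sum_(1 <= t < T.+1) @tot R S A H (fun h s a => (w t h s a - u h s a) * g t h s a).
pose Sw := \sum_(1 <= t < T.+1) @tot R S A H (fun h s a => w t h s a * g t h s a).
pose Su := \sum_(1 <= t < T.+1) @tot R S A H (fun h s a => u h s a * g t h s a).
have e1 : Sdiff = Sw - Su.
  rewrite /Sdiff /Sw /Su -sumrB; apply: eq_bigr => t _; rewrite -totB.
  by apply: eq_tot => h s a; rewrite mulrBl.
have e2 : Su = - (T%:R * Lbar).
  rewrite /Su tot_sum /Lbar /occ_l1 totE.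
  rewrite (@eq_tot R S A H _ (fun h s a => - (T%:R *
     `|occ rho P (pibar rho P pis T) h s a - dt h s a|))); last first.
    move=> h s a; rewrite -mulr_sumr /g /grad_f sumrB sumr_const_nat subn1 /=.
    have -> : \sum_(1 <= t < T.+1) occ rho P (pis t) h s a = T%:R * db h s a.
      by rewrite /db /dbar mulrA mulfV ?mul1r // pnatr_eq0 -lt0n.
    rewrite (@occ_pibar R S A H rho P pis T Hr HP T0 Hpis h (ltn_ord h) s a) -/db.
    rewrite -mulr_natl /u; case: ifP => hd.
      by rewrite ger0_norm //; ring.
    rewrite ltr0_norm; last by rewrite ltNge hd.
    ring.
  by rewrite /tot sumrN -mulr_sumr.
have e3 : - (T%:R * Lpi) <= Sw + T%:R * epsRL.
  have step : forall t, (1 <= t <= T)%N ->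
      - Lpi <= @tot R S A H (fun h s a => w t h s a * g t h s a) + epsRL.
    move=> t tT; have := (HRL t tT).2 pi Hpi; rewrite /value !totE.
    have Wtt := Wt t tT.
    have le1 : - Lpi <= @tot R S A H
        (fun h s a => w t h s a * (occ rho P pi h s a - dt h s a)).
      rewrite /Lpi /occ_l1 totE /tot -sumrN; apply: ler_sum => x _.
      have := Wtt x.1 x.2.1 x.2.2.
      move: (w t x.1 x.2.1 x.2.2) (occ rho P pi x.1 x.2.1 x.2.2 - dt x.1 x.2.1 x.2.2)
        => c y; rewrite ler_norml => /andP[c1 c2].
      by case: (lerP 0 y) => hy; [rewrite ger0_norm // | rewrite ltr0_norm //]; nra.
    have eA : @tot R S A H (fun h s a => w t h s a * (occ rho P pi h s a - dt h s a)) =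
        @tot R S A H (fun h s a => occ rho P pi h s a * w t h s a)
        - @tot R S A H (fun h s a => w t h s a * dt h s a).
      by rewrite -totB; apply: eq_tot => h s a; ring.
    have eB : @tot R S A H (fun h s a => w t h s a * g t h s a) =
        @tot R S A H (fun h s a => occ rho P (pis t) h s a * w t h s a)
        - @tot R S A H (fun h s a => w t h s a * dt h s a).
      by rewrite -totB; apply: eq_tot => h s a; rewrite /g /grad_f; ring.
    lra.
  apply: (le_trans (y := \sum_(1 <= t < T.+1) (- Lpi))).
    by rewrite sumr_const_nat subn1 /= -[- Lpi *+ T]mulr_natl mulrN.
  apply: (le_trans (y := \sum_(1 <= t < T.+1)
     (@tot R S A H (fun h s a => w t h s a * g t h s a) + epsRL))).
    rewrite big_nat_cond [X in _ <= X]big_nat_cond; apply: ler_sum.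
    by move=> t /andP[/andP[t1 tT] _]; apply: step; rewrite t1 -ltnS.
  by rewrite big_split /= sumr_const_nat subn1 /= -[epsRL *+ T]mulr_natl.
have hR1 : @tot R S A H (fun h s a => (w 1%N h s a - u h s a) ^+ 2)
    <= 4 * (H%:R * (#|S| * #|A|)%N%:R).
  rewrite -natrM -tot_const; apply: tot_le => h s a.
  have := W1 h s a; have := Wu h s a; rewrite !ler_norml => /andP[? ?] /andP[? ?].
  nra.
have hR2 : \sum_(1 <= t < T.+1) @tot R S A H (fun h s a => g t h s a ^+ 2)
    <= T%:R * (5 * H%:R).
  apply: (le_trans (y := \sum_(1 <= t < T.+1) (5 * H%:R))); last first.
    by rewrite sumr_const_nat subn1 /= -[(5 * H%:R) *+ T]mulr_natl.
  rewrite big_nat_cond [X in _ <= X]big_nat_cond; apply: ler_sum.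
  move=> t /andP[/andP[t1 tT] _].
  have tT' : (1 <= t <= T)%N by rewrite t1 -ltnS.
  apply: (@g2_bound R S A H rho P (pis t) dt Hr HP (Hpis t tT')
     (fun h s a => @dt_ge0 R S A H Denv D1 D1c h s a)
     (fun h => @dt_sum R S A H Denv D1 D1c h pDenv pD1c)).
have Tn0 : (0 : R) < T%:R by rewrite ltr0n.
have k0 : (0 : R) < (#|S| * #|A|)%N%:R by rewrite ltr0n.
have heta : eta ^+ 2 * (8 * T%:R) = (#|S| * #|A|)%N%:R.
  rewrite /eta sqr_sqrtr; last by apply: divr_ge0; rewrite ler0n.
  rewrite natrM -[(8 * T)%N]/(8 * T)%N natrM divfK //.
  by rewrite mulf_neq0 // ?pnatr_eq0 // -lt0n.
have eta0 : 0 < eta.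
  by rewrite /eta sqrtr_gt0 divr_gt0 // ltr0n muln_gt0 T0.
have hT' : 200 * H%:R ^+ 2 * (#|S| * #|A|)%N%:R <= T%:R * eps ^+ 2.
  by move: hT; rewrite -mulnA natrM natrM natrX.
have F := final_num Tn0 eta0 (ler0n R H) eps0 heta hT'.
exact: (F epsRL Lbar Lpi Sdiff Sw Su _ _ ogdH hR1 hR2 e1 e2 e3 epsRLh).
Qed.
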